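(* Let $q$ be a prime power, $n, m \in \mathbb{N}$. For every integer $0 \le d < mq^2$, $$\mathrm{rank}_{\mathbb{F}_q} \mathrm{EVAL}^m(\mathcal{V}_{\mathrm{full}}, W_{d,n}) = |W_{d,n}| = \binom{d+n}{d}.$$
   Context: Work over the field $\mathbb{F} = \mathbb{F}_q(t_1,t_2)$ of rational functions. For $f \in \mathbb{F}[x_1,\dots,x_n]$ and $\mathbf{i} \in \mathbb{Z}_{\ge 0}^n$, the $\mathbf{i}$-th Hasse derivative $f^{(\mathbf{i})}$ is defined by the expansion $f(x+z) = \sum_{\mathbf{j}} f^{(\mathbf{j})}(x) z^{\mathbf{j}}$; the weight of $\mathbf{j}$ is $\mathrm{wt}(\mathbf{j}) = \sum_i j_i$. $W_{d,n}$ is the set of monomials in $x_1,\dots,x_n$ of degree at most $d$. For $S \subset \mathbb{F}^n$ and a set of monomials $W$, $\mathrm{EVAL}^m(S,W)$ is the matrix with columns indexed by $f \in W$, rows indexed by pairs $(x,\mathbf{j}) \in S \times \mathbb{Z}_{\ge 0}^n$ with $\mathrm{wt}(\mathbf{j}) < m$, and $((x,\mathbf{j}),f)$ entry $f^{(\mathbf{j})}(x)$. For a matrix over an extension field of $\mathbb{F}_q$, $\mathrm{rank}_{\mathbb{F}_q}$ is the largest size of a set of columns no nonzero $\mathbb{F}_q$-linear combination of which is zero. $\mathcal{V} = \{u t_1 + v t_2 : u, v \in \mathbb{F}_q^n\}$ and $\mathcal{V}_{\mathrm{full}} = \{u t_1 + v t_2 \in \mathcal{V} : u, v \text{ linearly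 independent over } \mathbb{F}_q\}$. *)

(* Defs.v *)
From HB Require Import structures.
From mathcomp Require Import all_boot all_order all_algebra all_field.
From mathcomp Require Import fraction.
From mathcomp.multinomials Require Import mpoly.
From Stdlib Require Import ClassicalEpsilon.

Set Implicit Arguments.
Unset Strict Implicit.
Unset Printing Implicit Defensive.

Import GRing.Theory.
Local Open Scope ring_scope.

(* Hasse derivative, defined by the expansion f(x+z) = sum_j f^(j)(x) z^j :
   f(x+z) is computed in {mpoly {mpoly R[n]}[n]} (outer variables z,
   inner variables x), and f^(j) is the coefficient of z^j. *)
Definition hasse (R : comRingType) (n : nat) (j : 'X_{1..n}) (f : {mpoly R[n]})
  : {mpoly R[n]} :=
  (@mmap n R {mpoly {mpoly R[n]}[n]}
     (fun c : R => (c%:MP)%:MP)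
     (fun i : 'I_n => ('X_i : {mpoly R[n]})%:MP + 'X_i) f)@_j.

(* The field F = F_q(t1, t2), with F_q = K a finite field. *)
Definition FF (K : finFieldType) := {fraction {poly {poly K}}}.

Definition toFF (K : finFieldType) (p : {poly {poly K}}) : FF K :=
  @FracField.tofrac {poly {poly K}} p.

Definition inF (K : finFieldType) (c : K) : FF K := toFF ((c%:P)%:P).
Definition t1 (K : finFieldType) : FF K := toFF ((('X : {poly K})%:P)).
Definition t2 (K : finFieldType) : FF K := toFF ('X : {poly {poly K}}).

Definition pt (K : finFieldType) (n : nat) (u v : 'rV[K]_n) : 'I_n -> FF K :=
  fun i => inF (u 0 i) * t1 K + inF (v 0 i) * t2 K.

Definition lin_indep2 (K : finFieldType) (n : nat) (u v : 'rV[K]_n) : Prop :=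
  \rank (col_mx u v) = 2%N.

(* Entry ((x, j), f) of EVAL^m(V_full, W_{d,n}) for x = u t1 + v t2 and
   f = X^w : the value f^(j)(x). *)
Definition EVAL_entry (K : finFieldType) (n : nat) (u v : 'rV[K]_n)
  (j : 'X_{1..n}) (w : 'X_{1..n}) : FF K :=
  (hasse j ('X_[w] : {mpoly FF K[n]})).@[pt u v].

(* A set S of columns of EVAL^m(V_full, W_{d,n}) (columns indexed by the
   monomials of degree <= d, i.e. 'X_{1..n < d.+1}; rows by (x, j) with
   x in V_full and wt(j) < m, i.e. j : 'X_{1..n < m}) is F_q-linearly
   independent. *)
Definition Fq_indep_cols (K : finFieldType) (n m d : nat)
  (S : {set 'X_{1..n < d.+1}}) : Prop :=
  forall c : 'X_{1..n < d.+1} -> K,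
    (forall (u v : 'rV[K]_n) (j : 'X_{1..n < m}), lin_indep2 u v ->
       \sum_(w in S) inF (c w) * EVAL_entry u v j w = 0) ->
    forall w, w \in S -> c w = 0.

Definition Fq_indep_colsb (K : finFieldType) (n m d : nat)
  (S : {set 'X_{1..n < d.+1}}) : bool :=
  if excluded_middle_informative (@Fq_indep_cols K n m d S) then true else false.

Definition rank_Fq_EVAL (K : finFieldType) (n m d : nat) : nat :=
  \max_(S : {set 'X_{1..n < d.+1}} | @Fq_indep_colsb K n m d S) #|S|.

(* Main.v *)
Require Import Defs.
From HB Require Import structures.
From mathcomp Require Import all_boot all_order all_algebra all_field.
From mathcomp Require Import fraction.
From mathcomp.multinomials Require Import mpoly.
From mathcomp Require Import ring.
From Stdlib Require Import Classical ClassicalEpsilon.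
Set Implicit Arguments. Unset Strict Implicit. Unset Printing Implicit Defensive.
Import GRing.Theory.
Local Open Scope ring_scope.

Local Notation widen := (widen_ord (leqnSn _)).

Lemma uni_vanish (E : fieldType) (h : {poly E}) (tau : E) (k : nat) :
  (forall i, (i < k)%N -> (h \Po ('X + tau%:P))`_i = 0) -> ('X - tau%:P)^+k %| h.
Proof.
move=> H; set g := h \Po ('X + tau%:P).
have tk : take_poly k g = 0.
  by apply/polyP=> i; rewrite coef_take_poly coef0; case: ifP => // /H.
have eg : g = drop_poly k g * 'X^k by rewrite -{1}(poly_take_drop k g) tk add0r.
rewrite -(comp_polyXaddC_K h tau) -/g eg comp_polyM comp_Xn_poly.
exact: dvdp_mull.
Qed.

Lemma uni_zero (E : fieldType) (T : seq E) (k : nat) (h : {poly E}) : uniq T ->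
  (forall tau, tau \in T -> forall i, (i < k)%N -> (h \Po ('X + tau%:P))`_i = 0) ->
  (size h <= k * size T)%N -> h = 0.
Proof.
move=> uT H sh.
have dv : \prod_(t <- T) ('X - t%:P)^+k %| h.
  elim: T uT H {sh} => [|t s IH] /=; first by rewrite big_nil dvd1p.
  case/andP=> ts us H; rewrite big_cons Gauss_dvdp.
    rewrite uni_vanish ?IH // => [tau taus|]; first by apply: H; rewrite inE taus orbT.
    by apply: H; rewrite inE eqxx.
  apply: coprimep_expl; rewrite coprimep_sym coprimep_XsubC rootE horner_prod.
  rewrite prodf_seq_neq0; apply/allP => x xs /=.
  rewrite horner_exp hornerXsubC expf_neq0 // subr_eq0.
  by apply: contra ts => /eqP ->.
apply/eqP; apply: contraTT sh => hn0; rewrite -ltnNge.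
have := dvdp_leq hn0 dv; apply: leq_trans.
rewrite prodrXl.
have pn0 : \prod_(t <- T) ('X - t%:P) != 0 by rewrite -size_poly_eq0 size_prod_XsubC.
have := size_exp (\prod_(t <- T) ('X - t%:P)) k.
have := expf_neq0 k pn0; rewrite -size_poly_eq0.
rewrite size_prod_XsubC /= mulnC.
by case: (size _) => [|s] //= _ ->.
Qed.

Section Join.
Variable n : nat.
Definition mjoin (j : 'X_{1..n}) (i : nat) : 'X_{1..n.+1} := [multinom of rcons j i].
Definition mhead (m : 'X_{1..n.+1}) : 'X_{1..n} := [multinom m (widen k) | k < n].

Lemma mjoin_max j i : mjoin j i ord_max = i.
Proof. by rewrite multinomE (tnth_nth 0%N) nth_rcons /= size_tuple ltnn eqxx. Qed.

Lemma mjoin_widen j i (k : 'I_n) : mjoin j i (widen k) = j k.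
Proof. by case: j => j; rewrite !(mnm_nth 0%N) nth_rcons size_tuple /=; case: k => k /= ->. Qed.

Lemma mdeg_mjoin j i : mdeg (mjoin j i) = (mdeg j + i)%N.
Proof. by rewrite /mdeg /= big_rcons /= addnC. Qed.

Lemma mjoinK m : mjoin (mhead m) (m ord_max) = m.
Proof.
apply/mnmP => k; have [lt|] := ltnP k n.
  have -> : k = widen (Ordinal lt) by apply/val_inj.
  by rewrite mjoin_widen mnmE.
move=> ge; have -> : k = ord_max by apply/val_inj/eqP; rewrite eqn_leq ge -ltnS ltn_ord.
by rewrite mjoin_max.
Qed.

Lemma mheadK j i : mhead (mjoin j i) = j.
Proof. by apply/mnmP => k; rewrite mnmE mjoin_widen. Qed.

Lemma mjoin_inj j i j' i' : mjoin j i = mjoin j' i' -> j = j' /\ i = i'.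
Proof.
move=> e; split; first by rewrite -(mheadK j i) e mheadK.
by rewrite -(mjoin_max j i) e mjoin_max.
Qed.
End Join.

Lemma coef_muni (R : nzRingType) n (p : {mpoly R[n.+1]}) i j :
  ((muni p)`_i)@_j = p@_(mjoin j i).
Proof.
rewrite muniE coef_sum raddf_sum /=.
rewrite [in RHS](mpolyE p) raddf_sum /=.
apply: eq_bigr => m _.
rewrite coefZ coefXn mulr_natr raddfMn /= !mcoeffZ !mcoeffX.
rewrite -[in RHS](mjoinK m).
have [-> | ne] := eqVneq i (m ord_max).
  rewrite mulr1n mjoinK; congr (_ * (nat_of_bool _)%:R).
  apply/idP/idP => /eqP e; apply/eqP.
    by rewrite -e; exact: (esym (mjoinK m)).
  by have := mheadK j (m ord_max); rewrite -e.
rewrite mulr0n.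
have -> : (mjoin (mhead m) (m ord_max) == mjoin j i) = false.
  by apply/eqP => /mjoin_inj [_ e]; rewrite e eqxx in ne.
by rewrite mulr0.
Qed.

Section MuniX.
Variable n : nat.
Variable R : nzRingType.
Lemma mjoinU (k : 'I_n) : U_(widen k)%MM = mjoin U_(k)%MM 0.
Proof.
apply/mnmP => l; case: (unliftP ord_max l) => [k' ->|->].
  have -> : lift ord_max k' = widen k' by apply/val_inj; exact: lift_max.
  by rewrite mjoin_widen !mnm1E; congr nat_of_bool; apply/eqP/eqP => [/(congr1 val) /= e|->//]; apply/val_inj.
rewrite mjoin_max mnm1E; apply/eqP; rewrite eqb0 -val_eqE /= neq_ltn ltn_ord //.
Qed.

Lemma mjoinUmax : U_(@ord_max n)%MM = mjoin 0%MM 1.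
Proof.
apply/mnmP => l; case: (unliftP ord_max l) => [k' ->|->].
  have -> : lift ord_max k' = widen k' by apply/val_inj; exact: lift_max.
  rewrite mjoin_widen mnm1E mnm0E; apply/eqP; rewrite eqb0 -val_eqE /= neq_ltn ltn_ord orbT //.
by rewrite mnm1E eqxx mjoin_max.
Qed.

Lemma muniXw (k : 'I_n) : muni ('X_(widen k) : {mpoly R[n.+1]}) = ('X_k)%:P.
Proof.
apply/polyP => i; apply/mpolyP => j; rewrite coef_muni coefC mcoeffX mjoinU.
have [->|ne] := eqVneq i 0%N.
  by rewrite /= mcoeffX; congr (nat_of_bool _)%:R; apply/eqP/eqP => [/mjoin_inj [] ->|->] //.
rewrite mcoeff0; case: eqP => // /mjoin_inj [] _ e; by rewrite e eqxx in ne.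
Qed.

Lemma muniXmax : muni ('X_ord_max : {mpoly R[n.+1]}) = 'X.
Proof.
apply/polyP => i; apply/mpolyP => j; rewrite coef_muni coefX mcoeffX mjoinUmax.
have [->|ne] := eqVneq i 1%N.
  by rewrite /= mcoeffC mul1r; congr (nat_of_bool _)%:R; apply/eqP/eqP => [/mjoin_inj [] ->|->] //.
rewrite -[false%:R]/(0 : {mpoly R[n]}) mcoeff0; case: eqP => // /mjoin_inj [] _ e; by rewrite e eqxx in ne.
Qed.
End MuniX.
Lemma mpoly_rmorph_eq n (R : comRingType) (S : comRingType)
  (F G : {rmorphism {mpoly R[n]} -> S}) :
  (forall c, F c%:MP = G c%:MP) -> (forall i, F 'X_i = G 'X_i) -> F =1 G.
Proof.
move=> hC hX p; rewrite (mpolyE p) !rmorph_sum; apply: eq_bigr => m _.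
rewrite -mul_mpolyC !rmorphM hC; congr (_ * _).
rewrite mpolyXE_id !rmorph_prod; apply: eq_bigr => i _.
by rewrite !rmorphXn hX.
Qed.

Definition shift n (R : comRingType) (x : 'I_n -> R) (f : {mpoly R[n]}) : {mpoly R[n]} :=
  mmap (@mpolyC n R) (fun i => (x i)%:MP + 'X_i) f.

Lemma hasse_shift (R : comRingType) n (j : 'X_{1..n}) (f : {mpoly R[n]}) x :
  (hasse j f).@[x] = (shift x f)@_j.
Proof.
rewrite /hasse -mcoeff_map_mpoly.
pose Phi := (@mmap n R {mpoly {mpoly R[n]}[n]} (@mpolyC n _ \o @mpolyC n R)
     (fun i : 'I_n => ('X_i : {mpoly R[n]})%:MP + 'X_i)).
change (mmap _ _ f) with (Phi f).
congr (_@_j).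
have := @mpoly_rmorph_eq n R _ (map_mpoly (meval x) \o Phi) (shift x).
apply.
- move=> c; rewrite /= /Phi mmapC /shift mmapC /= map_mpolyC /= mevalC //.
- move=> i; rewrite /= /Phi /shift !mmapX !mmap1U rmorphD /= map_mpolyC.
  by congr (_ + _); [congr (_%:MP); apply: mevalXU | rewrite /map_mpoly mmapX mmap1U].
Qed.
Lemma shift_muni n (E : comRingType) (x : 'I_n.+1 -> E) (f : {mpoly E[n.+1]}) :
  muni (shift x f) = (map_poly (shift (fun k => x (widen k))) (muni f)) \Po ('X + ((x ord_max)%:MP)%:P).
Proof.
have := @mpoly_rmorph_eq n.+1 E _ (@muni n E \o shift x)
  (comp_poly ('X + ((x ord_max)%:MP)%:P) \o map_poly (shift (fun k => x (widen k))) \o @muni n E).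
apply.
- by move=> c; rewrite /= /shift !mmapC muniC map_polyC /= mmapC comp_polyC.
- move=> i; rewrite /= /shift !mmapX !mmap1U rmorphD /= muniC.
  case: (unliftP ord_max i) => [k ->|->].
    have -> : lift ord_max k = widen k by apply/val_inj; exact: lift_max.
    by rewrite muniXw map_polyC /= /shift mmapX mmap1U comp_polyC rmorphD.
  rewrite (muniXmax n E) map_polyX comp_polyX addrC //.
Qed.

Lemma shift_ext n (R : comRingType) (x y : 'I_n -> R) f : x =1 y -> shift x f = shift y f.
Proof.
move=> e; rewrite /shift /mmap; apply: eq_bigr => m _; congr (_ * _).
by apply: mmap1_eq => i; rewrite e.
Qed.

Lemma shift_map n (A B : comRingType) (phi : {rmorphism A -> B}) (x : 'I_n -> A) f :
  map_mpoly phi (shift x f) = shift (phi \o x) (map_mpoly phi f).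
Proof.
have := @mpoly_rmorph_eq n A _ (map_mpoly phi \o shift x) (shift (phi \o x) \o map_mpoly phi).
apply.
- by move=> c; rewrite /= /shift !mmapC map_mpolyC /= mmapC.
- move=> i; rewrite /= /shift !mmapX !mmap1U rmorphD /= map_mpolyC.
  by rewrite [map_mpoly phi 'X_i]/map_mpoly mmapX mmap1U /= mmapX mmap1U.
Qed.

Lemma coef_comp_bound (R : comRingType) (p q : {poly R}) N i : (size p <= N)%N ->
  (p \Po q)`_i = \sum_(k < N) p`_k * (q ^+ k)`_i.
Proof.
move=> le; rewrite coef_comp_poly (big_ord_widen N (fun k => p`_k * (q ^+ k)`_i)) //.
rewrite big_mkcond; apply: eq_bigr => k _; case: ifP => // /negbT.
by rewrite -leqNgt => /leq_sizeP -> //; rewrite mul0r.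
Qed.

Lemma shift_coef n (E : comRingType) (x : 'I_n.+1 -> E) (f : {mpoly E[n.+1]}) j i :
  (shift x f)@_(mjoin j i) =
  \sum_(k < size (muni f)) (shift (fun l => x (widen l)) (muni f)`_k)@_j *
      ((('X + (x ord_max)%:P) ^+ k)`_i).
Proof.
rewrite -coef_muni shift_muni (coef_comp_bound _ _ (N := size (muni f))); last first.
  exact: size_poly.
rewrite raddf_sum /=; apply: eq_bigr => k _.
have -> : ('X + ((x ord_max)%:MP)%:P : {poly {mpoly E[n]}}) = map_poly (@mpolyC n E) ('X + (x ord_max)%:P).
  by rewrite rmorphD /= map_polyX map_polyC.
rewrite -rmorphXn coef_map /= coef_map /= mulrC mcoeffCM mulrC //.
Qed.

From mathcomp Require Import zify.

Definition xjoin n (E : Type) (a : 'I_n -> E) (tau : E) : 'I_n.+1 -> E :=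
  fun k => if unlift ord_max k is Some k' then a k' else tau.

Lemma xjoin_widen n (E : Type) (a : 'I_n -> E) tau k : xjoin a tau (widen k) = a k.
Proof.
have -> : widen k = lift ord_max k by apply/val_inj; rewrite /=; exact: esym (lift_max k).
by rewrite /xjoin liftK.
Qed.

Lemma xjoin_max n (E : Type) (a : 'I_n -> E) tau : xjoin a tau ord_max = tau.
Proof. by rewrite /xjoin unlift_none. Qed.

Definition vanish (E : comRingType) (T : seq E) n m (f : {mpoly E[n]}) : Prop :=
  forall x : 'I_n -> E, (forall i, x i \in T) ->
  forall j : 'X_{1..n}, (mdeg j < m)%N -> (shift x f)@_j = 0.

Lemma msize_muni_coef n (R : nzRingType) (p : {mpoly R[n.+1]}) k :
  (msize ((muni p)`_k) <= msize p - k)%N.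
Proof.
rewrite msizeE; apply/bigmax_leqP_seq => j jin _.
rewrite mcoeff_msupp coef_muni -mcoeff_msupp in jin.
have := msize_mdeg_lt jin; rewrite mdeg_mjoin; lia.
Qed.

Lemma core (E : fieldType) (T : seq E) : uniq T ->
  forall n m (f : {mpoly E[n]}), vanish T m f -> (msize f <= m * size T)%N -> f = 0.
Proof.
move=> uT; elim => [|n IH] m f V sz.
  have f1 : (msize f <= 1)%N.
    rewrite msizeE; apply/bigmax_leqP_seq => j _ _.
    suff -> : j = 0%MM by rewrite mdeg0.
    by apply/mnmP => [[]].
  rewrite (msize1_polyC f1) in V *.
  case: m V sz => [|m] V sz.
    by move: sz; rewrite mul0n leqn0 msize_poly_eq0 => /eqP ->; rewrite mcoeff0.
  have := V (fun _ => 0) (fun i => match i with Ordinal _ h => False_ind _ (notF h) end) 0%MM.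
  by rewrite mdeg0 /shift mmapC mcoeffC eqxx mulr1 => ->.
have [N0|Npos] := posnP (size T).
  by move: sz; rewrite N0 muln0 leqn0 msize_poly_eq0 => /eqP.
apply/eqP; apply: contraTT sz => fn0; rewrite -ltnNge.
set P := muni f.
have Pn0 : P != 0.
  apply: contra fn0 => /eqP P0; apply/eqP/mpolyP => m0.
  by rewrite mcoeff0 -(mjoinK m0) -coef_muni -/P P0 coef0 mcoeff0.
set t := (size P).-1.
have sP : size P = t.+1 by rewrite /t prednK // lt0n size_poly_eq0.
set ft := lead_coef P.
have ftn0 : ft != 0 by rewrite lead_coef_eq0.
set q := (t %/ size T)%N.
have Vt : vanish T (m - q) ft.
  move=> a aT j jm.
  pose h := \poly_(k < size P) (shift a P`_k)@_j.
  have h0 : h = 0.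
    apply: (uni_zero (k := m - mdeg j) uT).
    - move=> tau tauT i ilt.
      rewrite (coef_comp_bound _ _ (N := size P)) ?size_poly //.
      have := shift_coef (xjoin a tau) f j i.
      rewrite V; first last.
      + by rewrite mdeg_mjoin; lia.
      + move=> k; case: (unliftP ord_max k) => [k' ->|->].
          by rewrite /xjoin liftK.
        by rewrite xjoin_max.
      move=> e; rewrite [RHS]e; apply: eq_bigr => k _.
      rewrite coef_poly ltn_ord xjoin_max; congr (_@_j * _).
      by apply: shift_ext => l; rewrite xjoin_widen.
    - apply: (leq_trans (size_poly _ _)); rewrite sP.
      apply: (leq_trans (ltn_ceil t Npos)); apply: leq_mul => //; lia.
  have : h`_t = 0 by rewrite h0 coef0.
  by rewrite /= coef_poly sP ltnSn.
have ftsz : ((m - q) * size T < msize ft)%N.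
  rewrite ltnNge; apply/negP => le; have := IH _ _ Vt le; apply/eqP; exact: ftn0.
have fts : (msize ft <= msize f - t)%N := msize_muni_coef f t.
have qN : (q * size T <= t)%N by apply: leq_trunc_div.
have [qm|mq] := leqP q m.
  move: ftsz; rewrite mulnBl => ftsz.
  have : (q * size T <= m * size T)%N by apply: leq_mul.
  lia.
have : (m * size T <= q * size T)%N by apply: leq_mul => //; exact: ltnW.
have : (m - q = 0)%N by lia.
move=> e; rewrite e mul0n in ftsz; lia.
Qed.

Section Top.
Variable K : finFieldType.
Local Notation A := {poly {poly K}}.

Definition cP : {rmorphism K -> A} := (@polyC {poly K}) \o (@polyC K).
Definition t1P : A := (('X : {poly K})%:P).
Definition t2P : A := 'X.
Definition ptP n (u v : 'rV[K]_n) : 'I_n -> A :=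
  fun i => cP (u 0 i) * t1P + cP (v 0 i) * t2P.

Lemma pt_tofrac n (u v : 'rV[K]_n) : pt u v =1 (@tofrac A) \o ptP u v.
Proof. by move=> i; rewrite /pt /ptP /= rmorphD !rmorphM. Qed.

Definition sig (s1 s2 : A) : {rmorphism A -> A} :=
  horner_eval s2 \o map_poly (horner_eval s1 \o map_poly cP).

Lemma sig_cP s1 s2 c : sig s1 s2 (cP c) = cP c.
Proof. by rewrite /sig /= map_polyC /= map_polyC /= !horner_evalE !hornerC. Qed.

Lemma sig_t1 s1 s2 : sig s1 s2 t1P = s1.
Proof. by rewrite /sig /= map_polyC /= map_polyX /= !horner_evalE hornerC hornerX. Qed.

Lemma sig_t2 s1 s2 : sig s1 s2 t2P = s2.
Proof. by rewrite /sig /= map_polyX !horner_evalE hornerX. Qed.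

Lemma sig_pt n (u v a b : 'rV[K]_n) (M11 M12 M21 M22 : K) :
  a = M11 *: u + M21 *: v -> b = M12 *: u + M22 *: v ->
  forall i, sig (cP M11 * t1P + cP M12 * t2P) (cP M21 * t1P + cP M22 * t2P) (ptP u v i) = ptP a b i.
Proof.
move=> -> -> i; rewrite /ptP rmorphD !rmorphM !sig_cP sig_t1 sig_t2.
rewrite !mxE !rmorphD !rmorphM /=; ring.
Qed.

Lemma indep_of n (u v : 'rV[K]_n) :
  (forall al be : K, al *: u + be *: v = 0 -> al = 0 /\ be = 0) -> lin_indep2 u v.
Proof.
move=> H; rewrite /lin_indep2.
have rf : row_free (col_mx u v).
  apply: inj_row_free => w.
  rewrite -[w]hsubmxK mul_row_col [lsubmx w]mx11_scalar [rsubmx w]mx11_scalar.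
  rewrite !mul_scalar_mx => /H [-> ->].
  by rewrite !raddf0 row_mx0.
by move: rf; rewrite /row_free => /eqP.
Qed.

Lemma nonzero_coord n (a : 'rV[K]_n) : a != 0 -> exists k, a 0 k != 0.
Proof.
move=> an0; apply/existsP; apply: contraR an0; rewrite negb_exists => /forallP H.
by apply/eqP/rowP => k; rewrite mxE; move: (H k); rewrite negbK => /eqP.
Qed.

Lemma indep_e n (a : 'rV[K]_n) (k l : 'I_n) : a 0 k != 0 -> k != l ->
  lin_indep2 a (delta_mx 0 l).
Proof.
move=> ak kl; apply: indep_of => al be /rowP H.
have := H k; rewrite !mxE eqxx /= (negbTE kl) mulr0 addr0 => /eqP.
rewrite mulf_eq0 (negbTE ak) orbF => /eqP al0; split => //.
have := H l; rewrite !mxE al0 mul0r add0r !eqxx /= mulr1 //.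
Qed.

Lemma exists_e n (a : 'rV[K]_n) : (1 < n)%N -> a != 0 -> exists l, lin_indep2 a (delta_mx 0 l).
Proof.
move=> n1 an0; have [k ak] := nonzero_coord an0.
have n0 : (0 < n)%N by apply: ltn_trans n1.
pose i0 := Ordinal n0; pose i1 := Ordinal n1.
have [e|ne] := eqVneq k i0.
  exists i1; apply: (indep_e ak); rewrite e; apply/eqP => /(congr1 val) //.
by exists i0; apply: (indep_e ak).
Qed.

Lemma exists_basis n (a b : 'rV[K]_n) : (1 < n)%N ->
  exists u v M11 M12 M21 M22, lin_indep2 u v /\
    a = M11 *: u + M21 *: v /\ b = M12 *: u + M22 *: v.
Proof.
move=> n1.
case: (classic (forall al be : K, al *: a + be *: b = 0 -> al = 0 /\ be = 0)) => [H|H].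
  exists a, b, 1, 0, 0, 1; split; first exact: indep_of.
  by rewrite !scale1r !scale0r addr0 add0r.
have [al [be [e nz]]] : exists al be, al *: a + be *: b = 0 /\ ~ (al = 0 /\ be = 0).
  apply: NNPP => C; apply: H => al be e; apply: NNPP => nz; apply: C.
  by exists al, be.
have [a0|an0] := eqVneq a 0.
  have [b0|bn0] := eqVneq b 0.
    have n0 : (0 < n)%N by apply: ltn_trans n1.
    exists (delta_mx 0 (Ordinal n0)), (delta_mx 0 (Ordinal n1)), 0, 0, 0, 0; split.
      apply: (indep_e (k := Ordinal n0)); first by rewrite mxE !eqxx oner_eq0.
      by apply/eqP => /(congr1 val).
    by rewrite !scale0r addr0 a0 b0.
  have [l Hl] := exists_e n1 bn0.
  exists b, (delta_mx 0 l), 0, 1, 0, 0; split => //.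
  by rewrite !scale0r !addr0 a0 scale1r.
have [l Hl] := exists_e n1 an0.
have ben0 : be != 0.
  apply/eqP => be0; apply: nz; split => //; move: e; rewrite be0 scale0r addr0.
  by move/eqP; rewrite scaler_eq0 (negbTE an0) orbF => /eqP.
exists a, (delta_mx 0 l), 1, (- (al / be)), 0, 0; split => //.
split; first by rewrite scale1r scale0r addr0.
rewrite scale0r addr0; apply/eqP; rewrite -(inj_eq (scalerI ben0)) scalerA.
rewrite mulrN mulrCA mulfV // mulr1 scaleNr -subr_eq0 opprK.
by rewrite addrC e.
Qed.

Lemma shiftZ n (R : comRingType) (x : 'I_n -> R) (a : R) p j :
  (shift x (a *: p))@_j = a * (shift x p)@_j.
Proof. by rewrite /shift mmapZ /= mcoeffCM. Qed.

Lemma shift_coef_sum n (R : comRingType) (x : 'I_n -> R) (I : Type) (r : seq I) (P : pred I)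
  (F : I -> {mpoly R[n]}) j :
  (shift x (\sum_(i <- r | P i) F i))@_j = \sum_(i <- r | P i) (shift x (F i))@_j.
Proof.
elim/big_rec2: _ => [|i y1 y2 _ <-]; first by rewrite /shift mmap0 mcoeff0.
by rewrite /shift mmapD mcoeffD.
Qed.

Lemma bmnm_coef n d (c : 'X_{1..n < d.+1} -> A) (w : 'X_{1..n < d.+1}) :
  (\sum_(w' : 'X_{1..n < d.+1}) c w' *: 'X_[bmnm w'])@_(bmnm w) = c w.
Proof.
rewrite raddf_sum (bigD1 w) //= mcoeffZ mcoeffX eqxx mulr1 big1 ?addr0 // => w' ne.
by rewrite mcoeffZ mcoeffX -bmeqP (negbTE ne) mulr0.
Qed.

Lemma indep_full n m d : (1 < n)%N -> (d < m * #|K| ^ 2)%N -> @Fq_indep_cols K n m d setT.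
Proof.
move=> n1 hd c H w _.
pose fP : {mpoly A[n]} := \sum_(w : 'X_{1..n < d.+1}) cP (c w) *: 'X_[bmnm w].
pose fF : {mpoly FF K[n]} := map_mpoly (@tofrac A) fP.
have fFE : fF = \sum_(w : 'X_{1..n < d.+1}) inF (c w) *: 'X_[bmnm w].
  by rewrite /fF rmorph_sum /=; apply: eq_bigr => w' _; rewrite map_mpolyZ map_mpolyX.
have tofrac_shift x j : @tofrac A ((shift x fP)@_j) = (shift (@tofrac A \o x) fF)@_j.
  by rewrite -mcoeff_map_mpoly shift_map.
have Ha u v (j : 'X_{1..n}) : (mdeg j < m)%N -> lin_indep2 u v -> (shift (ptP u v) fP)@_j = 0.
  move=> jm uv; have := H u v (BMultinom jm) uv.
  have -> : \sum_(w in [set: 'X_{1..n < d.+1}]) inF (c w) * EVAL_entry u v (BMultinom jm) w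
          = @tofrac A ((shift (ptP u v) fP)@_j).
    rewrite tofrac_shift (shift_ext _ (fun i => esym (pt_tofrac u v i))) fFE.
    rewrite shift_coef_sum (eq_bigl (fun _ => true)) => [|w']; last by rewrite inE.
    apply: eq_bigr => w' _; rewrite shiftZ; congr (_ * _).
    by rewrite /EVAL_entry hasse_shift.
  by move/eqP; rewrite tofrac_eq0 => /eqP.
have Hb a b (j : 'X_{1..n}) : (mdeg j < m)%N -> (shift (ptP a b) fP)@_j = 0.
  move=> jm; have [u [v [M11 [M12 [M21 [M22 [uv [ea eb]]]]]]]] := exists_basis a b n1.
  pose s := sig (cP M11 * t1P + cP M12 * t2P) (cP M21 * t1P + cP M22 * t2P).
  have sfP : map_mpoly s fP = fP.
    rewrite /fP rmorph_sum /=; apply: eq_bigr => w' _.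
    by rewrite map_mpolyZ map_mpolyX sig_cP.
  rewrite -(shift_ext _ (sig_pt ea eb)) -sfP.
  rewrite -(shift_ext _ (fun i => erefl ((s \o ptP u v) i))) -shift_map mcoeff_map_mpoly Ha //; exact: rmorph0.
pose T := [seq @tofrac A (cP ab.1 * t1P + cP ab.2 * t2P) | ab <- enum {: K * K}].
have ptinj : injective (fun ab : K * K => cP ab.1 * t1P + cP ab.2 * t2P).
  move=> [a1 b1] [a2 b2] /= e.
  have e1 := congr1 (fun p : A => (p`_1)`_0) e.
  have e0 := congr1 (fun p : A => (p`_0)`_1) e.
  move: e1 e0; rewrite /= /t1P /t2P /cP /= -!polyCM !coefD !coefMX !coefC /= ?coefD ?coefC ?coefMX /= ?coefC ?coefMX /=.
  by rewrite !add0r !addr0 => -> ->.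
have uT : uniq T.
  rewrite map_inj_uniq ?enum_uniq // => ab1 ab2 /eqP.
  by rewrite tofrac_eq => /eqP /ptinj.
have sT : size T = (#|K| ^ 2)%N by rewrite size_map -cardE card_prod expnS expn1.
have V : vanish T m fF.
  move=> x xT j jm.
  have ex i : exists ab : K * K, x i == @tofrac A (cP ab.1 * t1P + cP ab.2 * t2P).
    by have /mapP [ab _ ->] := xT i; exists ab.
  pose ab i := odflt (0, 0) [pick ab : K * K | x i == @tofrac A (cP ab.1 * t1P + cP ab.2 * t2P)].
  have abE i : x i = @tofrac A (cP (ab i).1 * t1P + cP (ab i).2 * t2P).
    rewrite /ab; case: pickP => [ab0 /eqP //|none].
    by have [ab0 e] := ex i; move: (none ab0); rewrite /= e.
  pose a : 'rV[K]_n := \row_i (ab i).1.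
  pose b : 'rV[K]_n := \row_i (ab i).2.
  have xE : x =1 @tofrac A \o ptP a b by move=> i; rewrite abE /= /ptP !mxE.
  by rewrite (shift_ext _ xE) -tofrac_shift Hb // rmorph0.
have szF : (msize fF <= m * size T)%N.
  rewrite sT; apply: leq_trans hd; rewrite fFE.
  apply: (leq_trans (msize_sum _ _ _)); apply/bigmax_leqP_seq => w' _ _.
  apply: (leq_trans (msizeZ_le _ _)); rewrite msizeX; exact: bmdeg.
have F0 := core uT V szF.
have : fF@_w = 0 by rewrite F0 mcoeff0.
rewrite /fF mcoeff_map_mpoly bmnm_coef => /eqP.
by rewrite tofrac_eq0 fmorph_eq0 => /eqP.
Qed.
End Top.
From mathcomp Require Import zify.
Lemma card_bmnm n d : #|{: 'X_{1..n < d.+1}}| = 'C(d + n, d).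
Proof.
pose f (w : 'X_{1..n < d.+1}) : n.-tuple 'I_d.+1 := [tuple inord (w i) | i < n].
have wle (w : 'X_{1..n < d.+1}) i : (w i <= d)%N.
  have := bmdeg w; rewrite mdegE (bigD1 i) //=; lia.
have inj_f : injective f.
  move=> w1 w2 /(congr1 (fun t => tnth t)) e; apply/val_inj/mnmP => i.
  by have := congr1 (fun g => val (g i)) e; rewrite /= !tnth_mktuple /= !inordK ?ltnS ?wle.
have -> : #|{: 'X_{1..n < d.+1}}| = #|[set f w | w in [set: 'X_{1..n < d.+1}]]|.
  by rewrite card_imset // cardsT.
have sumf w : (\sum_(i <- f w) i = mdeg w)%N.
  rewrite big_tuple mdegE; apply: eq_bigr => i _; rewrite tnth_mktuple inordK ?ltnS ?wle //.
have -> : [set f w | w in [set: 'X_{1..n < d.+1}]] =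
          [set t : n.-tuple 'I_d.+1 | (\sum_(i <- t) i <= d)%N].
  apply/setP => t; rewrite inE; apply/imsetP/idP => [[w _ ->]|ht].
    by rewrite sumf -ltnS bmdeg.
  have hm : (mdeg [multinom (val (tnth t i)) | i < n] < d.+1)%N.
    rewrite mdegE ltnS; apply: leq_trans ht; rewrite big_tuple leq_eqVlt; apply/orP; left.
    by apply/eqP; apply: eq_bigr => i _; rewrite mnmE.
  exists (BMultinom hm); rewrite ?inE //.
  apply: eq_from_tnth => i; rewrite tnth_mktuple /=; apply/val_inj.
  by rewrite mnmE /= inordK.
rewrite card_partial_ord_partitions addnC -bin_sub ?leq_addl // addnK //.
Qed.

Theorem mainTheorem15 (K : finFieldType) (n m d : nat) :
  (2 <= n)%N -> (d < m * #|K| ^ 2)%N ->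
  rank_Fq_EVAL K n m d = #|{: 'X_{1..n < d.+1}}| /\
  #|{: 'X_{1..n < d.+1}}| = 'C(d + n, d).
Proof.
move=> n2 hd; split; last exact: card_bmnm.
apply/eqP; rewrite eqn_leq; apply/andP; split.
  apply/bigmax_leqP => S _; exact: max_card.
have hT : @Fq_indep_colsb K n m d setT.
  rewrite /Fq_indep_colsb; case: ClassicalEpsilon.excluded_middle_informative => // nH.
  by exfalso; apply: nH; exact: indep_full.
rewrite -cardsT /rank_Fq_EVAL. by have := @leq_bigmax_cond _ (fun S : {set 'X_{1..n < d.+1}} => Fq_indep_colsb K m S) (fun S : {set 'X_{1..n < d.+1}} => #|S|) _ hT.
Qed.
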